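(* Let $(L,\le,\bot,\top)$ be a complete lattice and $(\&_i,\swarrow^i,\nwarrow_i)$, $i=1,\dots,n$, adjoint triples on $L$ with $x\,\&_i\,\top=\top\,\&_i\,x=x$ for all $x\in L$ and all $i$. Let $(A,B,R,\sigma)$ be a normalized context whose concept lattice $\mathcal{M}$ has a decomposition into independent blocks $\{K_\mu\}_{\mu\in\Lambda}$, and let $A_\mu,B_\mu$ be the associated sets defined below. Then $(A_\mu,B_\mu,R_\mu,\sigma_\mu)$, where $R_\mu,\sigma_\mu$ are the restrictions of $R,\sigma$ to $A_\mu\times B_\mu$, is a separable subcontext of $(A,B,R,\sigma)$ for every $\mu\in\Lambda$.
   Context: An adjoint triple on $L$ is a triple of maps $\&,\swarrow,\nwarrow\colon L\times L\to L$ with $x\le z\swarrow y\iff x\& y\le z\iff y\le z\nwarrow x$. A context is $(A,B,R,\sigma)$ with $A,B$ non-empty, $R\colon A\times B\to L$, $\sigma\colon A\times B\to\{1,\dots,n\}$; normalized means every $a\in A$ has $b_1,b_2$ with $R(a,b_1)\ne\bot$, $R(a,b_2)=\bot$, and every $b\in B$ has $a_1,a_2$ with $R(a_1,b)\ne\bot$, $R(a_2,b)=\bot$. For $g\colon B\to L$, $f\colon A\to L$: $g^\uparrow(a)=\inf_{b}R(a,b)\swarrow^{\sigma(a,b)}g(b)$, $f^\downarrow(b)=\inf_{a}R(a,b)\nwarrow_{\sigma(a,b)}f(a)$. $\mathcal{M}$ is the complete lattice of pairs $\langle g,f\rangle$ with $g^\uparrow=f$, $f^\downarrow=g$, ordered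 by $g_1\le g_2$ pointwise; top $\langle g_\top,f_\bot\rangle$, bottom $\langle g_\bot,f_\top\rangle$ ($g_\top,g_\bot,f_\top,f_\bot$ constant maps). $\phi_{a,x}\colon A\to L$ takes value $x$ at $a$ and $\bot$ elsewhere; $\phi_{b,y}\colon B\to L$ takes value $y$ at $b$ and $\bot$ elsewhere. For a bounded lattice $(M,\preceq,\bot,\top)$, a block is a sublattice $K\subsetneq M$ with $K\setminus\{\bot,\top\}\ne\varnothing$ and $(\{x\mid k\preceq x\}\cup\{x\mid x\preceq k\})\setminus\{\bot,\top\}\subseteq K$ for all $k\in K\setminus\{\bot,\top\}$; blocks $K_1,K_2$ are independent if $K_1\cap K_2\subseteq\{\bot,\top\}$; a decomposition into independent blocks is a family of pairwise independent blocks whose union is $M$. With $K_\mu^*=K_\mu\setminus\{\langle g_\top,f_\bot\rangle,\langle g_\bot,f_\top\rangle\}$: $A_\mu=\{a\in A\mid\langle\phi_{a,x}^\downarrow,\phi_{a,x}^{\downarrow\uparrow}\rangle\in K_\mu^*\text{ for some }x\in L\}$ and $B_\mu=\{b\in B\mid\langle\phi_{b,y}^{\uparrow\downarrow},\phi_{b,y}^{\uparrow}\rangle\in K_\mu^*\text{ for some }y\in L\}$. A separable subcontext is a tuple $(Y,X,R_{Y\times X},\sigma_{Y\times X})$ with $Y\subsetneq A$, $X\subsetneq B$ non-empty, such that $R(a,b)\ne\bot$ for some $a\in Y,b\in X$, $R(a,b')=\bot$ for all $(a,b')\in Y\times(B\setminus X)$, and $R(a',b)=\bot$ for all $(a',b)\in(A\setminus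 Y)\times X$. *)

(* Defs.v *)
From mathcomp Require Import all_boot.
From Stdlib Require Import ClassicalDescription.

Set Implicit Arguments.
Unset Strict Implicit.
Unset Printing Implicit Defensive.

Section FCA.

Variable L : Type.
Variable le : L -> L -> Prop.
Variable inf : (L -> Prop) -> L.

Definition complete_lattice : Prop :=
  (forall x, le x x) /\
  (forall x y, le x y -> le y x -> x = y) /\
  (forall x y z, le x y -> le y z -> le x z) /\
  (forall (S : L -> Prop) x, S x -> le (inf S) x) /\
  (forall (S : L -> Prop) y, (forall x, S x -> le y x) -> le y (inf S)).

Definition botL : L := inf (fun _ => True).
Definition topL : L := inf (fun _ => False).

Definition adjoint_triple (conj sw nw : L -> L -> L) : Prop :=
  forall x y z,
    (le x (sw z y) <-> le (conj x y) z) /\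
    (le (conj x y) z <-> le y (nw z x)).

Variable n : nat.
Variables (sw nw : 'I_n -> L -> L -> L).
Variables (A B : Type).
Variable R : A -> B -> L.
Variable sigma : A -> B -> 'I_n.

Definition normalized : Prop :=
  (forall a : A, (exists b1, R a b1 <> botL) /\ (exists b2, R a b2 = botL)) /\
  (forall b : B, (exists a1, R a1 b <> botL) /\ (exists a2, R a2 b = botL)).

Definition up (g : B -> L) : A -> L :=
  fun a => inf (fun z => exists b, z = sw (sigma a b) (R a b) (g b)).
Definition down (f : A -> L) : B -> L :=
  fun b => inf (fun z => exists a, z = nw (sigma a b) (R a b) (f a)).

Definition pairT : Type := ((B -> L) * (A -> L))%type.

Definition is_concept (c : pairT) : Prop := up c.1 = c.2 /\ down c.2 = c.1.

Definition M_le (c d : pairT) : Prop := forall b, le (c.1 b) (d.1 b).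

Definition M_top : pairT := (fun _ => topL, fun _ => botL).
Definition M_bot : pairT := (fun _ => botL, fun _ => topL).

Definition M_glb (x y m : pairT) : Prop :=
  is_concept m /\ M_le m x /\ M_le m y /\
  (forall c, is_concept c -> M_le c x -> M_le c y -> M_le c m).
Definition M_lub (x y m : pairT) : Prop :=
  is_concept m /\ M_le x m /\ M_le y m /\
  (forall c, is_concept c -> M_le x c -> M_le y c -> M_le m c).

Definition sublattice (K : pairT -> Prop) : Prop :=
  (forall c, K c -> is_concept c) /\
  (forall x y m, K x -> K y -> M_glb x y m -> K m) /\
  (forall x y m, K x -> K y -> M_lub x y m -> K m).

Definition trivial_elt (c : pairT) : Prop := c = M_bot \/ c = M_top.

Definition block (K : pairT -> Prop) : Prop :=
  sublattice K /\
  (exists c, is_concept c /\ ~ K c) /\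
  (exists k, K k /\ ~ trivial_elt k) /\
  (forall k, K k -> ~ trivial_elt k ->
     forall x, is_concept x -> (M_le k x \/ M_le x k) -> ~ trivial_elt x -> K x).

Definition independent (K1 K2 : pairT -> Prop) : Prop :=
  forall c, K1 c -> K2 c -> trivial_elt c.

Definition independent_block_decomposition (Lam : Type) (K : Lam -> pairT -> Prop) : Prop :=
  (forall mu, block (K mu)) /\
  (forall mu nu, mu <> nu -> independent (K mu) (K nu)) /\
  (forall c, is_concept c <-> exists mu, K mu c).

Definition phiA (a : A) (x : L) : A -> L :=
  fun a' => if excluded_middle_informative (a' = a) then x else botL.
Definition phiB (b : B) (y : L) : B -> L :=
  fun b' => if excluded_middle_informative (b' = b) then y else botL.

Definition Kstar (K : pairT -> Prop) (c : pairT) : Prop := K c /\ ~ trivial_elt c.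

Definition A_mu (K : pairT -> Prop) : A -> Prop :=
  fun a => exists x, Kstar K (down (phiA a x), up (down (phiA a x))).
Definition B_mu (K : pairT -> Prop) : B -> Prop :=
  fun b => exists y, Kstar K (down (up (phiB b y)), up (phiB b y)).

(* separable subcontext (Y, X, R|YxX, sigma|YxX); the restrictions of R and
   sigma are determined by Y and X *)
Definition separable_subcontext (Y : A -> Prop) (X : B -> Prop) : Prop :=
  (exists a, Y a) /\ (exists a, ~ Y a) /\
  (exists b, X b) /\ (exists b, ~ X b) /\
  (exists a b, Y a /\ X b /\ R a b <> botL) /\
  (forall a b', Y a -> ~ X b' -> R a b' = botL) /\
  (forall a' b, ~ Y a' -> X b -> R a' b = botL).

End FCA.

(* Main.v *)
Require Import Defs.
From mathcomp Require Import all_boot.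
From Stdlib Require Import Classical FunctionalExtensionality ClassicalDescription.

Theorem proposition35
  (L : Type) (le : L -> L -> Prop) (inf : (L -> Prop) -> L)
  (HL : complete_lattice le inf)
  (n : nat) (conj sw nw : 'I_n -> L -> L -> L)
  (Hadj : forall i, adjoint_triple le (conj i) (sw i) (nw i))
  (Hunit : forall i x, conj i x (topL inf) = x /\ conj i (topL inf) x = x)
  (A B : Type) (HA : inhabited A) (HB : inhabited B)
  (R : A -> B -> L) (sigma : A -> B -> 'I_n)
  (Hnorm : normalized inf R)
  (Lam : Type) (K : Lam -> pairT L A B -> Prop)
  (Hdec : independent_block_decomposition le inf sw nw R sigma K)
  (mu : Lam) :
  separable_subcontext inf R
    (A_mu inf sw nw R sigma (K mu)) (B_mu inf sw nw R sigma (K mu)).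
Proof.
destruct HL as [Hrefl [Hanti [Htrans [Hlb Hglb]]]].
pose bot := botL inf. pose top := topL inf.
change (botL inf) with bot in Hnorm |- *. change (topL inf) with top in Hunit.
have Hbot : forall x, le bot x by intro x; apply Hlb; exact I.
have Htop : forall x, le x top by intro x; apply Hglb; intros _ [].
have adj1 : forall i x y z, le x (sw i z y) <-> le (conj i x y) z
  by intros i x y z; exact (proj1 (Hadj i x y z)).
have adj2 : forall i x y z, le (conj i x y) z <-> le y (nw i z x)
  by intros i x y z; exact (proj2 (Hadj i x y z)).
have nw_bot : forall i z, nw i z bot = top.
{ intros i z. apply Hanti; first by apply Htop.
  apply adj2. apply adj1. apply Hbot. }
have sw_bot : forall i z, sw i z bot = top.
{ intros i z. apply Hanti; first by apply Htop.
  apply adj1. apply adj2. apply Hbot. }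
have nw_top : forall i z, nw i z top = z.
{ intros i z. apply Hanti.
  - have H := proj2 (adj2 i top (nw i z top) z) (Hrefl _).
    by rewrite (proj2 (Hunit i _)) in H.
  - apply adj2. rewrite (proj2 (Hunit i _)). apply Hrefl. }
have sw_top : forall i z, sw i z top = z.
{ intros i z. apply Hanti.
  - have H := proj1 (adj1 i (sw i z top) top z) (Hrefl _).
    by rewrite (proj1 (Hunit i _)) in H.
  - apply adj1. rewrite (proj1 (Hunit i _)). apply Hrefl. }
have nw_self : forall i z, nw i z z = top.
{ intros i z. apply Hanti; first by apply Htop.
  apply adj2. rewrite (proj1 (Hunit i _)). apply Hrefl. }
have sw_self : forall i z, sw i z z = top.
{ intros i z. apply Hanti; first by apply Htop.
  apply adj1. rewrite (proj2 (Hunit i _)). apply Hrefl. }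
destruct Hnorm as [HnA HnB].
have Hnt : ~ le top bot.
{ destruct HA as [a0]. destruct (HnA a0) as [[b1 Hb1] _]. intro H.
  apply Hb1. apply Hanti; last by apply Hbot. eapply Htrans; [apply Htop | exact H]. }
pose dn := down inf nw R sigma. pose upp := up inf sw R sigma.
have dn_lb : forall f a b, le (dn f b) (nw (sigma a b) (R a b) (f a)).
{ intros f a b. apply Hlb. exists a. reflexivity. }
have dn_glb : forall f b y, (forall a, le y (nw (sigma a b) (R a b) (f a))) -> le y (dn f b).
{ intros f b y H. apply Hglb. intros z [a ->]. apply H. }
have up_lb : forall g a b, le (upp g a) (sw (sigma a b) (R a b) (g b)).
{ intros g a b. apply Hlb. exists b. reflexivity. }
have up_glb : forall g a y, (forall b, le y (sw (sigma a b) (R a b) (g b))) -> le y (upp g a).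
{ intros g a y H. apply Hglb. intros z [b ->]. apply H. }
have gal : forall f g, (forall b, le (g b) (dn f b)) <-> (forall a, le (f a) (upp g a)).
{ intros f g. split.
  - intros H a. apply up_glb. intro b. apply adj1. apply adj2.
    eapply Htrans; [apply H | apply dn_lb].
  - intros H b. apply dn_glb. intro a. apply adj2. apply adj1.
    eapply Htrans; [apply H | apply up_lb]. }
have ext1 : forall g b, le (g b) (dn (upp g) b).
{ intros g. apply gal. intro a. apply Hrefl. }
have ext2 : forall f a, le (f a) (upp (dn f) a).
{ intros f. apply gal. intro b. apply Hrefl. }
have dn_anti : forall f f', (forall a, le (f a) (f' a)) -> forall b, le (dn f' b) (dn f b).
{ intros f f' H. apply gal. intro a. eapply Htrans; [apply H | apply ext2]. }
have up_anti : forall g g', (forall b, le (g b) (g' b)) -> forall a, le (upp g' a) (upp g a).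
{ intros g g' H. apply gal. intro b. eapply Htrans; [apply H | apply ext1]. }
have dud : forall f, dn (upp (dn f)) = dn f.
{ intro f. apply functional_extensionality. intro b. apply Hanti.
  - apply dn_anti. apply ext2.
  - apply ext1. }
have udu : forall g, upp (dn (upp g)) = upp g.
{ intro g. apply functional_extensionality. intro a. apply Hanti.
  - apply up_anti. apply ext1.
  - apply ext2. }
have phiA_eq : forall (a : A) (x : L), phiA inf a x a = x.
{ intros a x. unfold phiA. destruct (excluded_middle_informative (a = a)); [reflexivity | contradiction]. }
have phiA_ne : forall (a : A) (x : L) (a' : A), a' <> a -> phiA inf a x a' = bot.
{ intros a x a' H. unfold phiA. destruct (excluded_middle_informative (a' = a)); [contradiction | reflexivity]. }
have phiB_eq : forall (b : B) (y : L), phiB inf b y b = y.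
{ intros b y. unfold phiB. destruct (excluded_middle_informative (b = b)); [reflexivity | contradiction]. }
have phiB_ne : forall (b : B) (y : L) (b' : B), b' <> b -> phiB inf b y b' = bot.
{ intros b y b' H. unfold phiB. destruct (excluded_middle_informative (b' = b)); [contradiction | reflexivity]. }
have phiA_le : forall (a : A) (x x' : L) (a' : A), le x x' -> le (phiA inf a x a') (phiA inf a x' a').
{ intros a x x' a' H. destruct (classic (a' = a)) as [->|Hne].
  - by rewrite !phiA_eq. - rewrite (phiA_ne _ _ _ Hne). apply Hbot. }
have phiB_le : forall (b : B) (y y' : L) (b' : B), le y y' -> le (phiB inf b y b') (phiB inf b y' b').
{ intros b y y' b' H. destruct (classic (b' = b)) as [->|Hne].
  - by rewrite !phiB_eq. - rewrite (phiB_ne _ _ _ Hne). apply Hbot. }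
pose Cc := fun (a : A) (x : L) => (dn (phiA inf a x), upp (dn (phiA inf a x))) : pairT L A B.
pose Dc := fun (b : B) (y : L) => (dn (upp (phiB inf b y)), upp (phiB inf b y)) : pairT L A B.
have Cc_conc : forall a x, is_concept inf sw nw R sigma (Cc a x).
{ intros a x. split; [reflexivity | apply dud]. }
have Dc_conc : forall b y, is_concept inf sw nw R sigma (Dc b y).
{ intros b y. split; [apply udu | reflexivity]. }
have T1 : forall c, is_concept inf sw nw R sigma c -> (forall b, le top (c.1 b)) -> c = M_top inf A B.
{ intros [g f] [Hu Hd] H. simpl in *.
  have Hg : g = fun _ => top.
  { apply functional_extensionality; intro b. apply Hanti; [apply Htop | apply H]. }
  have Hf : f = fun _ => bot.
  { apply functional_extensionality; intro a. apply Hanti; [|apply Hbot].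
    destruct (HnA a) as [_ [b2 Hb2]]. rewrite <- Hu.
    eapply Htrans; [apply (up_lb _ a b2)|]. rewrite Hg sw_top Hb2. apply Hrefl. }
  by rewrite Hg Hf. }
have T2 : forall c, is_concept inf sw nw R sigma c -> (forall b, le (c.1 b) bot) -> c = M_bot inf A B.
{ intros [g f] [Hu Hd] H. simpl in *.
  have Hg : g = fun _ => bot.
  { apply functional_extensionality; intro b. apply Hanti; [apply H | apply Hbot]. }
  have Hf : f = fun _ => top.
  { apply functional_extensionality; intro a. apply Hanti; [apply Htop|].
    rewrite <- Hu. apply up_glb. intro b. rewrite Hg sw_bot. apply Hrefl. }
  by rewrite Hg Hf. }
have T3 : forall c, is_concept inf sw nw R sigma c -> (forall a, le (c.2 a) bot) -> c = M_top inf A B.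
{ intros [g f] [Hu Hd] H. simpl in *.
  have Hf : f = fun _ => bot.
  { apply functional_extensionality; intro a. apply Hanti; [apply H | apply Hbot]. }
  have Hg : g = fun _ => top.
  { apply functional_extensionality; intro b. apply Hanti; [apply Htop|].
    rewrite <- Hd. apply dn_glb. intro a. rewrite Hf nw_bot. apply Hrefl. }
  by rewrite Hg Hf. }
have T4 : forall c, is_concept inf sw nw R sigma c -> (forall a, le top (c.2 a)) -> c = M_bot inf A B.
{ intros [g f] [Hu Hd] H. simpl in *.
  have Hf : f = fun _ => top.
  { apply functional_extensionality; intro a. apply Hanti; [apply Htop | apply H]. }
  have Hg : g = fun _ => bot.
  { apply functional_extensionality; intro b. apply Hanti; [|apply Hbot].
    destruct (HnB b) as [_ [a2 Ha2]]. rewrite <- Hd.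
    eapply Htrans; [apply (dn_lb _ a2 b)|]. rewrite Hf nw_top Ha2. apply Hrefl. }
  by rewrite Hg Hf. }
have Cc_ge : forall a b, le (R a b) (dn (phiA inf a top) b).
{ intros a b. apply dn_glb. intro a'. destruct (classic (a' = a)) as [->|Hne].
  - rewrite phiA_eq nw_top. apply Hrefl.
  - rewrite (phiA_ne _ _ _ Hne) nw_bot. apply Htop. }
have Cc_le : forall a b, le (dn (phiA inf a top) b) (R a b).
{ intros a b. eapply Htrans; [apply (dn_lb _ a b)|]. rewrite phiA_eq nw_top. apply Hrefl. }
have Dc_ge : forall a b, le (R a b) (upp (phiB inf b top) a).
{ intros a b. apply up_glb. intro b'. destruct (classic (b' = b)) as [->|Hne].
  - rewrite phiB_eq sw_top. apply Hrefl.
  - rewrite (phiB_ne _ _ _ Hne) sw_bot. apply Htop. }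
have Dc_le : forall a b, le (upp (phiB inf b top) a) (R a b).
{ intros a b. eapply Htrans; [apply (up_lb _ a b)|]. rewrite phiB_eq sw_top. apply Hrefl. }
have Cc_nt : forall a, ~ trivial_elt inf (Cc a top).
{ intros a [H|H].
  - destruct (HnA a) as [[b1 Hb1] _]. apply Hb1. apply Hanti; [|apply Hbot].
    have := f_equal (fun c : pairT L A B => c.1 b1) H. simpl. intro E.
    eapply Htrans; [apply Cc_ge|]. rewrite E. apply Hrefl.
  - destruct (HnA a) as [_ [b2 Hb2]]. apply Hnt.
    have := f_equal (fun c : pairT L A B => c.1 b2) H. simpl. intro E.
    apply (Htrans _ (dn (phiA inf a top) b2)); [rewrite E; apply Hrefl|].
    eapply Htrans; [apply Cc_le|]. rewrite Hb2. apply Hrefl. }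
have Dc_nt : forall b, ~ trivial_elt inf (Dc b top).
{ intros b [H|H].
  - destruct (HnB b) as [_ [a2 Ha2]]. apply Hnt.
    have := f_equal (fun c : pairT L A B => c.2 a2) H. simpl. intro E.
    apply (Htrans _ (upp (phiB inf b top) a2)); [rewrite E; apply Hrefl|].
    eapply Htrans; [apply Dc_le|]. rewrite Ha2. apply Hrefl.
  - destruct (HnB b) as [[a1 Ha1] _]. apply Ha1. apply Hanti; [|apply Hbot].
    have := f_equal (fun c : pairT L A B => c.2 a1) H. simpl. intro E.
    eapply Htrans; [apply Dc_ge|]. rewrite E. apply Hrefl. }
have Cc_le_top : forall a x, M_le le (Cc a top) (Cc a x).
{ intros a x b. apply dn_anti. intro a'. apply phiA_le. apply Htop. }
have Dc_le_top : forall b y, M_le le (Dc b y) (Dc b top).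
{ intros b y b0. apply dn_anti. apply up_anti. intro b'. apply phiB_le. apply Htop. }
destruct Hdec as [Hblk [Hind Hcov]].
have Hconc : forall nu c, K nu c -> is_concept inf sw nw R sigma c.
{ intros nu c H. exact (proj1 (proj1 (Hblk nu)) c H). }
have clos : forall nu k x, K nu k -> ~ trivial_elt inf k -> is_concept inf sw nw R sigma x ->
   (M_le le k x \/ M_le le x k) -> ~ trivial_elt inf x -> K nu x.
{ intros nu k x Hk Hkt Hx Hc Hxt. destruct (Hblk nu) as [_ [_ [_ Hcl]]]. eapply Hcl; eauto. }
have Achar : forall nu a, A_mu inf sw nw R sigma (K nu) a <-> K nu (Cc a top).
{ intros nu a. split.
  - intros [x [Hx Hxt]]. exact (clos nu (Cc a x) (Cc a top) Hx Hxt (Cc_conc a top) (or_intror (Cc_le_top a x)) (Cc_nt a)).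
  - intro H. exists top. split; [exact H | apply Cc_nt]. }
have Bchar : forall nu b, B_mu inf sw nw R sigma (K nu) b <-> K nu (Dc b top).
{ intros nu b. split.
  - intros [y [Hy Hyt]].
    exact (clos nu (Dc b y) (Dc b top) Hy Hyt (Dc_conc b top) (or_introl (Dc_le_top b y)) (Dc_nt b)).
  - intro H. exists top. split; [exact H | apply Dc_nt]. }
have Ane : forall nu, exists a, K nu (Cc a top).
{ intro nu. destruct (Hblk nu) as [_ [_ [[k [Kk Hkt]] _]]].
  have Hk := Hconc nu k Kk. destruct k as [g f]. destruct Hk as [Hu Hd]. simpl in Hu, Hd. change (upp g = f) in Hu. change (dn f = g) in Hd.
  destruct (classic (exists a, ~ trivial_elt inf (Cc a (f a)))) as [[a Ha]|Hall].
  - exists a. apply (Achar nu a). exists (f a). split; [|exact Ha].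
    apply (clos nu (g, f) _ Kk Hkt (Cc_conc a (f a))); [|exact Ha]. left. intro b. simpl.
    apply gal. intro a'. rewrite Hu. destruct (classic (a' = a)) as [->|Hne].
    + rewrite phiA_eq. apply Hrefl.
    + rewrite (phiA_ne _ _ _ Hne). apply Hbot.
  - exfalso. apply Hkt. right. apply T1; [split; assumption|]. intro b. simpl.
    rewrite <- Hd. apply dn_glb. intro a.
    have Ht : Cc a (f a) = M_top inf A B.
    { destruct (classic (trivial_elt inf (Cc a (f a)))) as [[H|H]|H].
      - exfalso. apply Hkt. left. apply T2; [split; assumption|]. intro b'. simpl.
        have := f_equal (fun c : pairT L A B => c.1 b') H. simpl. intro E.
        apply (Htrans _ (dn (phiA inf a (f a)) b')); [|rewrite E; apply Hrefl].
        apply gal. intro a'. rewrite Hu. destruct (classic (a' = a)) as [->|Hne].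
        + rewrite phiA_eq. apply Hrefl.
        + rewrite (phiA_ne _ _ _ Hne). apply Hbot.
      - exact H.
      - exfalso. apply Hall. exists a. exact H. }
    have := f_equal (fun c : pairT L A B => c.1 b) Ht. simpl. intro E.
    apply (Htrans _ (dn (phiA inf a (f a)) b)); [rewrite E; apply Hrefl|].
    eapply Htrans; [apply (dn_lb _ a b)|]. rewrite phiA_eq. apply Hrefl. }
have Bne : forall nu, exists b, K nu (Dc b top).
{ intro nu. destruct (Hblk nu) as [_ [_ [[k [Kk Hkt]] _]]].
  have Hk := Hconc nu k Kk. destruct k as [g f]. destruct Hk as [Hu Hd]. simpl in Hu, Hd.
  change (upp g = f) in Hu. change (dn f = g) in Hd.
  have Hle : forall b, M_le le (Dc b (g b)) (g, f).
  { intros b b'. simpl. apply (Htrans _ (dn f b')); [|rewrite Hd; apply Hrefl].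
    apply dn_anti. intro a. apply (Htrans _ (upp g a)); [rewrite Hu; apply Hrefl|].
    apply up_anti. intro b''. destruct (classic (b'' = b)) as [->|Hne].
    + rewrite phiB_eq. apply Hrefl.
    + rewrite (phiB_ne _ _ _ Hne). apply Hbot. }
  destruct (classic (exists b, ~ trivial_elt inf (Dc b (g b)))) as [[b Hb]|Hall].
  - exists b. apply (Bchar nu b). exists (g b). split; [|exact Hb].
    exact (clos nu (g, f) _ Kk Hkt (Dc_conc b (g b)) (or_intror (Hle b)) Hb).
  - exfalso. apply Hkt. left. apply T4; [split; assumption|]. intro a. simpl.
    rewrite <- Hu. apply up_glb. intro b.
    have Ht : Dc b (g b) = M_bot inf A B.
    { destruct (classic (trivial_elt inf (Dc b (g b)))) as [[H|H]|H].
      - exact H.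
      - exfalso. apply Hkt. right. apply T1; [split; assumption|]. intro b'.
        have := f_equal (fun c : pairT L A B => c.1 b') H. simpl. intro E.
        apply (Htrans _ (dn (upp (phiB inf b (g b))) b')); [rewrite E; apply Hrefl|].
        apply (Hle b b').
      - exfalso. apply Hall. exists b. exact H. }
    have := f_equal (fun c : pairT L A B => c.2 a) Ht. simpl. intro E.
    apply (Htrans _ (upp (phiB inf b (g b)) a)); [rewrite E; apply Hrefl|].
    eapply Htrans; [apply (up_lb _ a b)|]. rewrite phiB_eq. apply Hrefl. }
have link : forall a b nu nu', R a b <> bot -> K nu (Cc a top) -> K nu' (Dc b top) -> nu = nu'.
{ intros a b nu nu' Hab Ha Hb.
  have HE1 : M_le le (Dc b (R a b)) (Cc a top).
  { intro b'. apply gal. intro a'. rewrite udu. destruct (classic (a' = a)) as [->|Hne].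
    - rewrite phiA_eq. apply up_glb. intro b''. destruct (classic (b'' = b)) as [->|Hne'].
      + rewrite phiB_eq sw_self. apply Hrefl.
      + rewrite (phiB_ne _ _ _ Hne') sw_bot. apply Hrefl.
    - rewrite (phiA_ne _ _ _ Hne). apply Hbot. }
  have HEt : ~ trivial_elt inf (Dc b (R a b)).
  { intros [H|H].
    - apply Hab. apply Hanti; [|apply Hbot].
      have := f_equal (fun c : pairT L A B => c.1 b) H. simpl. intro E.
      apply (Htrans _ (dn (upp (phiB inf b (R a b))) b)); [|rewrite E; apply Hrefl].
      have := ext1 (phiB inf b (R a b)) b. rewrite phiB_eq. auto.
    - apply (Cc_nt a). right. apply T1; [apply Cc_conc|]. intro b'.
      have := f_equal (fun c : pairT L A B => c.1 b') H. simpl. intro E.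
      apply (Htrans _ (dn (upp (phiB inf b (R a b))) b')); [rewrite E; apply Hrefl|].
      apply HE1. }
  have K1 := clos nu _ _ Ha (Cc_nt a) (Dc_conc b (R a b)) (or_intror HE1) HEt.
  have K2 := clos nu' _ _ Hb (Dc_nt b) (Dc_conc b (R a b)) (or_intror (Dc_le_top b (R a b))) HEt.
  destruct (classic (nu = nu')) as [|Hne]; [assumption|].
  exfalso. exact (HEt (Hind nu nu' Hne _ K1 K2)). }
destruct (Hblk mu) as [_ [[c [Hc HKc]] _]].
destruct (proj1 (Hcov c) Hc) as [nu Hnu].
have Hne : mu <> nu by intro E; subst; contradiction.
unfold separable_subcontext.
split; [|split; [|split; [|split; [|split; [|split]]]]].
- destruct (Ane mu) as [a Ha]. exists a. by apply Achar.
- destruct (Ane nu) as [a Ha]. exists a. intro H. apply (proj1 (Achar _ _)) in H.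
  exact (Cc_nt a (Hind mu nu Hne _ H Ha)).
- destruct (Bne mu) as [b Hb]. exists b. by apply Bchar.
- destruct (Bne nu) as [b Hb]. exists b. intro H. apply (proj1 (Bchar _ _)) in H.
  exact (Dc_nt b (Hind mu nu Hne _ H Hb)).
- destruct (Ane mu) as [a Ha]. destruct (HnA a) as [[b Hb] _].
  destruct (proj1 (Hcov _) (Dc_conc b top)) as [nu' Hnu'].
  have E := link a b mu nu' Hb Ha Hnu'. subst nu'.
  exists a, b. split; [by apply Achar|]. split; [by apply Bchar|exact Hb].
- intros a b Ha Hb. apply (proj1 (Achar _ _)) in Ha.
  destruct (classic (R a b = bot)) as [|Hab]; [assumption|]. exfalso.
  destruct (proj1 (Hcov _) (Dc_conc b top)) as [nu' Hnu'].
  have E := link a b mu nu' Hab Ha Hnu'. subst nu'.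
  apply Hb. by apply Bchar.
- intros a b Ha Hb. apply (proj1 (Bchar _ _)) in Hb.
  destruct (classic (R a b = bot)) as [|Hab]; [assumption|]. exfalso.
  destruct (proj1 (Hcov _) (Cc_conc a top)) as [nu' Hnu'].
  have E := link a b nu' mu Hab Hnu' Hb. subst nu'.
  apply Ha. by apply Achar.
Qed.
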